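(* Let $U$ be a Hilbert space and $H: U \rightrightarrows U$ a set-valued map with $H^{-1}(0) \neq \emptyset$. For each $i \in \mathbb{N}$ let $\widetilde H_{i+1}: U \rightrightarrows U$ and $M_{i+1}, Z_{i+1} \in \mathcal{L}(U;U)$ with $Z_{i+1}M_{i+1}$ self-adjoint. Let $(u^i)_{i\in\mathbb{N}} \subset U$ satisfy \[ 0 \in \widetilde H_{i+1}(u^{i+1}) + M_{i+1}(u^{i+1}-u^i) \quad (i \in \mathbb{N}). \] Suppose that for every $i \in \mathbb{N}$ there is $\Delta_{i+1} \in \mathbb{R}$ such that for every $q \in \widetilde H_{i+1}(u^{i+1})$, \[ \tfrac{1}{2}\|u^{i+1}-u^i\|_{Z_{i+1}M_{i+1}}^2 + \inf_{u^* \in H^{-1}(0)}\Big( \tfrac12 \|u^{i+1}-u^*\|^2_{Z_{i+1}M_{i+1}} + \langle q, u^{i+1}-u^*\rangle_{Z_{i+1}}\Big) \ge \tfrac12 \operatorname{dist}^2_{Z_{i+2}M_{i+2}}(u^{i+1}, H^{-1}(0)) - \Delta_{i+1}. \] Then for all $N \ge 1$, \[ \tfrac12 \operatorname{dist}^2_{Z_{N+1}M_{N+1}}(u^N, H^{-1}(0)) \le \tfrac12 \operatorname{dist}^2_{Z_1M_1}(u^0, H^{-1}(0)) + \sum_{i=0}^{N-1}\Delta_{i+1}. \]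
   Context: $\mathbb{N}=\{0,1,2,\dots\}$. $\mathcal{L}(U;U)$ denotes bounded linear operators on $U$. For $T \in \mathcal{L}(U;U)$ (not necessarily self-adjoint or positive) write $\langle x, z\rangle_T := \langle Tx, z\rangle$, $\|x\|_T^2 := \langle Tx, x\rangle$, and for $A \subset U$, $\operatorname{dist}^2_T(z, A) := \inf_{u \in A}\|z-u\|_T^2$. $H^{-1}(0) := \{u \in U : 0 \in H(u)\}$. *)

(* Defs.v *)
From HB Require Import structures.
From mathcomp Require Import all_boot all_order all_algebra.
From mathcomp Require Import all_classical all_reals all_analysis.
Set Implicit Arguments. Unset Strict Implicit. Unset Printing Implicit Defensive.
Import Order.TTheory GRing.Theory Num.Theory.
Import numFieldNormedType.Exports.
Local Open Scope classical_set_scope.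
Local Open Scope ring_scope.

Definition is_inner_product (R : realType) (U : normedModType R)
  (inner : U -> U -> R) : Prop :=
  [/\ (forall x y, inner x y = inner y x),
      (forall a x y z, inner (a *: x + y) z = a * inner x z + inner y z)
    & (forall x, inner x x = `|x| ^+ 2)].

Definition bounded_linear (R : realType) (U : normedModType R) (T : U -> U) : Prop :=
  (forall a x y, T (a *: x + y) = a *: T x + T y) /\ continuous T.

Definition self_adjoint (R : realType) (U : Type) (inner : U -> U -> R)
  (T : U -> U) : Prop := forall x y, inner (T x) y = inner x (T y).

Definition ipT (R : realType) (U : Type) (inner : U -> U -> R) (T : U -> U)
  (x z : U) : R := inner (T x) z.

Definition normT2 (R : realType) (U : Type) (inner : U -> U -> R) (T : U -> U)
  (x : U) : R := inner (T x) x.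

(* dist^2_T(z, A) := inf_{u in A} ||z - u||_T^2 (extended real, may be -oo) *)
Definition distT2 (R : realType) (U : zmodType) (inner : U -> U -> R)
  (T : U -> U) (z : U) (A : set U) : \bar R :=
  ereal_inf [set (normT2 inner T (z - u))%:E | u in A].

Definition zeros (U : zmodType) (H : U -> set U) : set U := [set u | H u 0].

(* Main.v *)
Require Import Defs.
From HB Require Import structures.
From mathcomp Require Import all_boot all_order all_algebra.
From mathcomp Require Import all_classical all_reals all_analysis.
From mathcomp Require Import lra.
Import Order.TTheory GRing.Theory Num.Theory.
Import numFieldNormedType.Exports.
Local Open Scope classical_set_scope.
Local Open Scope ring_scope.

Section Helpers.
Variables (R : realType) (U : completeNormedModType R) (inner : U -> U -> R).
Hypothesis Hinner : is_inner_product inner.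

Lemma innerBl x y z : inner (x - y) z = inner x z - inner y z.
Proof.
case: Hinner => _ Hl _.
by rewrite addrC -scaleN1r Hl mulN1r addrC.
Qed.

Lemma innerBr x y z : inner z (x - y) = inner z x - inner z y.
Proof.
case: (Hinner) => Hs _ _.
by rewrite Hs innerBl (Hs x) (Hs y).
Qed.

Lemma linB {f : U -> U} : (forall a x y, f (a *: x + y) = a *: f x + f y) ->
  forall x y, f (x - y) = f x - f y.
Proof.
by move=> Hf x y; rewrite addrC -scaleN1r Hf scaleN1r addrC.
Qed.

Lemma linN {f : U -> U} : (forall a x y, f (a *: x + y) = a *: f x + f y) ->
  forall x, f (- x) = - f x.
Proof.
move=> Hf x.
have h0 : f 0 = 0 by have := linB Hf 0 0; rewrite subr0 subrr.
by have := linB Hf 0 x; rewrite !sub0r => ->; rewrite h0 sub0r.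
Qed.

Lemma innerNl x z : inner (- x) z = - inner x z.
Proof. by rewrite -sub0r innerBl -(subrr x) innerBl subrr sub0r. Qed.

Lemma three_point {A : U -> U} :
  (forall a x y, A (a *: x + y) = a *: A x + A y) ->
  (forall x y, inner (A x) y = inner x (A y)) ->
  forall x y,
  2^-1 * inner (A x) x + (2^-1 * inner (A y) y + inner (- A x) y) =
  2^-1 * inner (A (y - x)) (y - x).
Proof.
move=> HA Hsa x y.
case: (Hinner) => Hs _ _.
rewrite (linB HA) innerNl !innerBl !innerBr (Hsa y x) (Hs y (A x)).
lra.
Qed.

End Helpers.
Arguments innerBl {R U inner}.
Arguments innerBr {R U inner}.
Arguments linB {R U f}.
Arguments linN {R U f}.
Arguments three_point {R U inner} Hinner {A}.

Theorem theorem3p1 (R : realType) (U : completeNormedModType R)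
  (inner : U -> U -> R) (Hinner : is_inner_product inner)
  (H : U -> set U) (Hne : zeros H !=set0)
  (Ht : nat -> U -> set U) (M Z : nat -> U -> U)
  (HM : forall i, bounded_linear (M i.+1))
  (HZ : forall i, bounded_linear (Z i.+1))
  (HZM : forall i, self_adjoint inner (Z i.+1 \o M i.+1))
  (u : nat -> U)
  (Hiter : forall i, exists q, Ht i.+1 (u i.+1) q /\
                              q + M i.+1 (u i.+1 - u i) = 0)
  (Delta : nat -> R)
  (Hdesc : forall i q, Ht i.+1 (u i.+1) q ->
     ((2^-1 * normT2 inner (Z i.+1 \o M i.+1) (u i.+1 - u i))%:E
      + ereal_inf [set ((2^-1 * normT2 inner (Z i.+1 \o M i.+1) (u i.+1 - us)
                         + ipT inner (Z i.+1) q (u i.+1 - us))%:E) | us in zeros H]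
      >= (2^-1)%:E * distT2 inner (Z i.+2 \o M i.+2) (u i.+1) (zeros H)
         - (Delta i.+1)%:E)%E) :
  forall N : nat, is_true (leq 1 N) ->
    ((2^-1)%:E * distT2 inner (Z N.+1 \o M N.+1) (u N) (zeros H)
     <= (2^-1)%:E * distT2 inner (Z 1%N \o M 1%N) (u 0%N) (zeros H)
        + (\sum_(i < N) Delta i.+1)%:E)%E.
Proof.
pose d i := ((2^-1)%:E * distT2 inner (Z i.+1 \o M i.+1) (u i) (zeros H))%E.
have step : forall i, (d i.+1 <= d i + (Delta i.+1)%:E)%E.
  move=> i; have [q [Hq Hqe]] := Hiter i.
  have := Hdesc i q Hq; rewrite leeBlDr // => Hle.
  apply: (le_trans Hle); rewrite leeD2r //.
  rewrite /d /distT2 -ereal_inf_pZl ?invr_gt0 ?ltr0n //.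
  apply/ereal_infP => _ [_ [us Hus <-] <-].
  rewrite -EFinM.
  apply: le_trans; first by apply: leeD2l; apply: ereal_inf_lbound; exists us.
  rewrite -EFinD lee_fin le_eqVlt; apply/orP; left; apply/eqP.
  have Hq' : q = - M i.+1 (u i.+1 - u i).
    by apply/eqP; rewrite -addr_eq0 Hqe.
  have [HZl _] := HZ i; have [HMl _] := HM i.
  have HAl : forall a x y, (Z i.+1 \o M i.+1) (a *: x + y) =
      a *: (Z i.+1 \o M i.+1) x + (Z i.+1 \o M i.+1) y.
    by move=> a x y /=; rewrite HMl HZl.
  rewrite /normT2 /ipT Hq' (linN HZl).
  set A := (Z i.+1 \o M i.+1) in HAl *.
  have -> : u i - us = (u i.+1 - us) - (u i.+1 - u i).
    by rewrite opprB [RHS]addrC [RHS]addrA subrK.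
  set x := u i.+1 - u i; set y := u i.+1 - us.
  have -> : - Z i.+1 (M i.+1 x) = - A x by [].

  exact: (three_point Hinner HAl (HZM i)).
move=> N _.
elim: N => [|N IH].
  by rewrite big_ord0 adde0.
apply: (le_trans (step N)).
rewrite big_ord_recr /= EFinD addeA leeD2r //.
Qed.
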